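(* Let $r\ge 2$. Then $\mathscr{Z}^{\rm TAR}(K_{1,r})\cong K_{1,r}\,\square\,K_2$. Furthermore, $\overline{\operatorname{Z}}(K_{1,r})=\operatorname{Z}(K_{1,r})=r-1$ and $z_0(K_{1,r})=\underline{z_0}(K_{1,r})=r$.
   Context: Zero forcing on a graph $G$: starting with a set $S$ of blue vertices (others white), a blue vertex $v$ may change a white vertex $w$ to blue if $w$ is the only white neighbor of $v$. $S$ is a zero forcing set if repeated application colors all of $V(G)$ blue. $\operatorname{Z}(G)$ is the minimum size of a zero forcing set, $\overline{\operatorname{Z}}(G)$ the maximum size of a minimal (under inclusion) zero forcing set. $\mathscr{Z}^{\rm TAR}(G)$ has vertices the zero forcing sets of $G$, two adjacent iff their symmetric difference has size 1; $\mathscr{Z}^{\rm TAR}_k(G)$ is its subgraph induced by zero forcing sets of size at most $k$. $\underline{z_0}(G)$ is the least $k$ with $\mathscr{Z}^{\rm TAR}_k(G)$ connected; $z_0(G)$ is the least $k$ such that $\mathscr{Z}^{\rm TAR}_i(G)$ is connected for every $i=k,\dots,|V(G)|$. $K_{1,r}$ is the star with $r$ leaves; $\square$ denotes the Cartesian product of graphs. *)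

(* Defs.v *)
From mathcomp Require Import all_boot.
Set Implicit Arguments. Unset Strict Implicit. Unset Printing Implicit Defensive.

Section ZeroForcing.
Variables (T : finType) (e : rel T).

(* One round of the color change rule, applied to every possible force:
   w becomes blue if some blue v adjacent to w has all its neighbours other
   than w blue (i.e. w is the only white neighbour of v). *)
Definition zf_step (B : {set T}) : {set T} :=
  B :|: [set w | [exists v in B,
                   e v w && [forall u, e v u ==> (u == w) || (u \in B)]]].

(* Final coloring obtained from S: |T| rounds suffice (each round either
   stabilises or adds a vertex). *)
Definition zf_closure (S : {set T}) : {set T} := iter #|T| zf_step S.

Definition zero_forcing (S : {set T}) : bool := zf_closure S == setT.

(* Z(G): minimum size of a zero forcing set (V(G) itself is zero forcing). *)
Definition Zn : nat := \big[minn/#|T|]_(S : {set T} | zero_forcing S) #|S|.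

Definition Zbar : nat :=
  \max_(S : {set T} | minset zero_forcing S) #|S|.

Definition TARv := {S : {set T} | zero_forcing S}.

Definition symdiff (A B : {set T}) : {set T} := (A :\: B) :|: (B :\: A).

Definition TAR_rel : rel TARv :=
  fun A B => #|symdiff (val A) (val B)| == 1.

Definition induced_connected (U : finType) (f : rel U) (P : pred U) : bool :=
  [exists x, P x] &&
  [forall x, forall y, P x ==> P y ==>
    connect (fun a b => [&& P a, P b & f a b]) x y].

Definition TARk_connected (k : nat) : bool :=
  induced_connected TAR_rel (fun A : TARv => #|val A| <= k).

Definition z0_low : nat :=
  \big[minn/#|T|]_(k < #|T|.+1 | TARk_connected k) (k : nat).

Definition z0 : nat :=
  \big[minn/#|T|]_(k < #|T|.+1 |
     [forall i : 'I_#|T|.+1, (k <= i) ==> TARk_connected i]) (k : nat).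

End ZeroForcing.

Definition isomorphic (U W : finType) (f : rel U) (g : rel W) : Prop :=
  exists h : U -> W, bijective h /\ forall x y, f x y = g (h x) (h y).

(* Star K_{1,r}: center None, leaves Some i (i < r). *)
Definition star (r : nat) : rel (option 'I_r) :=
  fun x y => (x == None) != (y == None).

Definition K2 : rel bool := fun a b => a != b.

Definition cartprod (A B : finType) (eA : rel A) (eB : rel B) : rel (A * B) :=
  fun x y => ((x.1 == y.1) && eB x.2 y.2) || ((x.2 == y.2) && eA x.1 y.1).
Arguments star r : clear implicits.
Arguments TAR_rel {T} e.
Arguments Zn {T} e.
Arguments Zbar {T} e.
Arguments z0 {T} e.
Arguments z0_low {T} e.

(* Main.v *)
Require Import Defs.
From mathcomp Require Import all_boot zify.
Set Implicit Arguments. Unset Strict Implicit. Unset Printing Implicit Defensive.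

Section Star.
Variable r : nat.
Hypothesis hr : 1 < r.
Local Notation T := (option 'I_r).
Local Notation e := (star r).

Definition zfc (S : {set T}) :=
  [forall i, forall j, (Some i \notin S) ==> (Some j \notin S) ==> (i == j)].

Lemma iter_sub n (B : {set T}) : B \subset iter n (zf_step e) B.
Proof.
elim: n => [|n IH] /=; first exact: subxx.
apply: subset_trans IH _; exact: subsetUl.
Qed.

Lemma step_keep i j (B : {set T}) : i != j -> Some i \notin B -> Some j \notin B ->
  Some i \notin zf_step e B.
Proof.
move=> ij hi hj; rewrite /zf_step !inE (negbTE hi) /=.
apply/existsP => -[v /andP [vB /andP [ev /forallP H]]].
case: v vB ev H => [v|] //= vB ev H.
have := H (Some j); rewrite /star /= (negbTE hj) orbF.
by move/eqP => [E]; move: ij; rewrite E eqxx.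
Qed.

Definition i0 : 'I_r := Ordinal (ltn_trans (ltnSn 0) hr).
Definition i1 : 'I_r := Ordinal hr.

Lemma i01 : i0 != i1. Proof. by []. Qed.

Lemma zf_char S : zero_forcing e S = zfc S.
Proof.
apply/idP/idP.
- move=> zf; apply/forallP => i; apply/forallP => j; apply/implyP => hi.
  apply/implyP => hj; apply/negPn/negP => ij.
  have inv : forall n, (Some i \notin iter n (zf_step e) S) && (Some j \notin iter n (zf_step e) S).
    elim=> [|n /andP [IHi IHj]] /=; first by rewrite hi hj.
    by rewrite (step_keep ij) // (step_keep (j:=i)) // eq_sym.
  move: zf; rewrite /zero_forcing /zf_closure => /eqP E.
  by have := inv #|{: T}|; rewrite E inE.
- move=> /forallP Z.
  have Zij : forall i j, Some i \notin S -> Some j \notin S -> i = j.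
    by move=> i j hi hj; have := Z i => /forallP /(_ j); rewrite hi hj => /eqP.
  have N1 : None \in zf_step e S.
    have [l lS] : exists l, Some l \in S.
      case: (boolP (Some i0 \in S)) => h0; first by exists i0.
      case: (boolP (Some i1 \in S)) => h1; first by exists i1.
      by have := Zij _ _ h0 h1 => /eqP; rewrite (negbTE i01).
    rewrite /zf_step !inE; apply/orP; right; apply/existsP; exists (Some l).
    rewrite lS /=; apply/forallP => -[u|] //=.
  have S1 : S \subset zf_step e S by exact: subsetUl.
  have T2 : iter 2 (zf_step e) S = setT.
    apply/eqP; rewrite eqEsubset subsetT /=; apply/subsetP => x _.
    case: x => [i|]; last by rewrite /zf_step inE N1.
    case: (boolP (Some i \in S)) => hi.
      by rewrite /zf_step inE (subsetP S1 _ hi).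
    rewrite {1}/zf_step inE; apply/orP; right.
    rewrite inE; apply/existsP; exists None; rewrite N1 /=.
    apply/forallP => -[j|] //=; apply/orP.
    case: (eqVneq j i) => [->|ji]; first by left.
    right; apply: (subsetP S1); apply/negPn/negP => hj.
    by move: ji; rewrite (Zij _ _ hj hi) eqxx.
  rewrite /zero_forcing /zf_closure card_option card_ord.
  have -> : r.+1 = (r.+1 - 2) + 2 by rewrite subnK // ltnW.
  rewrite iterD T2 eqEsubset subsetT /=; exact: iter_sub.
Qed.

Definition mkS (p : option 'I_r * bool) : {set T} :=
  [set x | if x is Some i then Some i != p.1 else p.2].

Lemma zf_mkS p : zero_forcing e (mkS p).
Proof.
rewrite zf_char; apply/forallP => i; apply/forallP => j.
rewrite !inE !negbK; apply/implyP => /eqP hi; apply/implyP => /eqP hj.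
by move: hj; rewrite -hi => -[->].
Qed.

Definition g (p : option 'I_r * bool) : TARv e := exist _ (mkS p) (zf_mkS p).
Definition h (S : TARv e) : option 'I_r * bool :=
  ([pick i | Some i \notin val S], None \in val S).

Lemma hK : cancel h g.
Proof.
move=> S; apply: val_inj => /=; apply/setP => x; rewrite inE.
have Z := valP S; rewrite /= zf_char in Z.
case: x => [i|] //=.
case: pickP => [k Hk | H] /=.
  case: (boolP (Some i \in val S)) => hi.
    by apply/eqP => -[E]; move: Hk; rewrite -E hi.
  apply/negbTE; rewrite negbK.
  by move/forallP: Z => /(_ i) /forallP /(_ k); rewrite hi Hk /= => /eqP ->.
by have := H i; rewrite /= => /negbFE ->.
Qed.

Lemma gK : cancel g h.
Proof.
case=> a b; rewrite /h /= inE /=; congr (_, _).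
case: pickP => [k|H] /=.
  by rewrite inE negbK => /eqP.
by case: a H => [a|] // H; have := H a; rewrite /= inE negbK eqxx.
Qed.

Definition sz (p : option 'I_r * bool) : nat := p.2 + (r - (p.1 != None)).

Lemma card_opt (A : {set T}) : #|A| = (None \in A) + #|[set i | Some i \in A]|.
Proof.
rewrite (cardD1 None) -(card_imset _ (@Some_inj _)); congr (_ + _).
apply: eq_card => -[i|]; rewrite !inE /=.
  by rewrite (mem_imset _ _ (@Some_inj _)) inE.
by apply/esym/negbTE/imsetP => -[x].
Qed.

Lemma card_mkS p : #|mkS p| = sz p.
Proof.
rewrite card_opt /sz inE; case: p => a b /=; congr (_ + _).
case: a => [j|] /=.
  rewrite subn1 -[X in X.-1](card_ord r) -(cardsC1 j); apply: eq_card => i.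
  by rewrite !inE.
by rewrite subn0 -[in RHS](card_ord r) -cardsT; apply: eq_card => i; rewrite !inE.
Qed.

Lemma card_h (S : TARv e) : #|val S| = sz (h S).
Proof. by rewrite -{1}(hK S) card_mkS. Qed.


Lemma in_symdiff (A B : {set T}) x : (x \in symdiff A B) = ((x \in A) != (x \in B)).
Proof. by rewrite !inE; case: (x \in A); case: (x \in B). Qed.

Lemma card1_false (A : {set T}) x y b : x \in A -> y \in A -> x != y -> b = false -> (#|A| == 1) = b.
Proof.
move=> hx hy xy ->; apply/negbTE/cards1P => -[z hz].
by move: hx hy xy; rewrite hz !inE => /eqP -> /eqP ->; rewrite eqxx.
Qed.

Lemma card_e0 (A : {set T}) : (forall x, (x \in A) = false) -> (#|A| == 1) = false.
Proof. by move=> H; rewrite (_ : A = set0) ?cards0 //; apply/setP => x; rewrite H inE. Qed.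

Lemma card_e1 (A : {set T}) y b : b = true -> (forall x, (x \in A) = (x == y)) -> (#|A| == 1) = b.
Proof. by move=> -> H; rewrite (_ : A = [set y]) ?cards1 //; apply/setP => x; rewrite H inE. Qed.

Lemma adj_mk p q : (#|symdiff (mkS p) (mkS q)| == 1) = cartprod e K2 p q.
Proof.
case: p q => a b [a' b']; rewrite /cartprod /K2 /star /=.
case: (eqVneq a a') => [<-|ne].
  rewrite eqxx /= andbF orbF.
  case: b; case: b' => /=.
  - by apply: card_e0 => // x; rewrite in_symdiff !inE; case: x => [k|] //=; rewrite ?eqxx.
  - by apply: (card_e1 (y := None)) => // x; rewrite in_symdiff !inE; case: x => [k|] //=; rewrite ?eqxx.
  - by apply: (card_e1 (y := None)) => // x; rewrite in_symdiff !inE; case: x => [k|] //=; rewrite ?eqxx.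
  - by apply: card_e0 => // x; rewrite in_symdiff !inE; case: x => [k|] //=; rewrite ?eqxx.
rewrite /=.
case: a a' ne => [i|] [j|] // ne.
- rewrite /= andbF; apply: (@card1_false _ (Some i) (Some j)) => //;
    move: ne; rewrite in_symdiff !inE /= ?[Some j == _]eq_sym; by case: (Some i =P Some j) => // _ _; rewrite eqxx.
- rewrite /= ?eqxx /= ?andbT; case: b; case: b' => /=.
  + by apply: (card_e1 (y := Some i)) => // x; rewrite in_symdiff !inE; case: x => //= k; case: (Some k == Some i).
  + by apply: (@card1_false _ None (Some i)) => //; rewrite in_symdiff !inE /= ?eqxx.
  + by apply: (@card1_false _ None (Some i)) => //; rewrite in_symdiff !inE /= ?eqxx.
  + by apply: (card_e1 (y := Some i)) => // x; rewrite in_symdiff !inE; case: x => //= k; case: (Some k == Some i).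
- rewrite /= ?eqxx /= ?andbT; case: b; case: b' => /=.
  + by apply: (card_e1 (y := Some j)) => // x; rewrite in_symdiff !inE; case: x => //= k; case: (Some k == Some j).
  + by apply: (@card1_false _ None (Some j)) => //; rewrite in_symdiff !inE /= ?eqxx.
  + by apply: (@card1_false _ None (Some j)) => //; rewrite in_symdiff !inE /= ?eqxx.
  + by apply: (card_e1 (y := Some j)) => // x; rewrite in_symdiff !inE; case: x => //= k; case: (Some k == Some j).
Qed.

Lemma adj_TAR (S S' : TARv e) : TAR_rel e S S' = cartprod e K2 (h S) (h S').
Proof. by rewrite -adj_mk -{1}(hK S) -{1}(hK S'). Qed.


Lemma sz_lb p : r - 1 <= sz p.
Proof. by case: p => [[a|] [|]]; rewrite /sz /=; lia. Qed.

Lemma zf_lb S : zero_forcing e S -> r - 1 <= #|S|.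
Proof. by move=> H; rewrite (card_h (exist _ S H)) sz_lb. Qed.

Lemma bigmin_eq (I : finType) (P : pred I) (F : I -> nat) d m i :
  P i -> F i = m -> (forall j, P j -> m <= F j) -> m <= d ->
  \big[minn/d]_(j | P j) F j = m.
Proof.
move=> Pi Fi H md; apply/eqP; rewrite eqn_leq; apply/andP; split.
  rewrite -Fi -big_filter.
  have : i \in [seq j <- index_enum I | P j] by rewrite mem_filter Pi mem_index_enum.
  elim: [seq j <- index_enum I | P j] => // a s IH; rewrite inE big_cons.
  case/orP => [/eqP <-|/IH]; first exact: geq_minl.
  by move/(leq_trans _); apply; apply: geq_minr.
by apply: (big_ind (fun x => m <= x)) => // x y; rewrite leq_min => -> ->.
Qed.

Lemma Zn_star : Zn e = r - 1.
Proof.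
apply: (bigmin_eq (i := mkS (Some i0, false))).
- exact: zf_mkS.
- by rewrite card_mkS /sz /=.
- exact: zf_lb.
- by rewrite card_option card_ord; lia.
Qed.

Lemma Zbar_star : Zbar e = r - 1.
Proof.
apply/eqP; rewrite eqn_leq; apply/andP; split.
  apply/bigmax_leqP => S /minsetP [zS minS].
  set X : TARv e := exist _ S zS.
  have ES : mkS (h X) = S by exact: (congr1 val (hK X)).
  move: ES; case: (h X) => a b ES.
  pose a' := if a is Some j then Some j else Some i0.
  have sub : mkS (a', false) \subset S.
    apply/subsetP => -[i|]; rewrite -ES !inE //= /a'.
    by rewrite /a'; case: a {ES} a' => [j|].
  by rewrite -(minS _ (zf_mkS _) sub) card_mkS /sz /a'; case: a {ES sub} a'.
have M : minset (zero_forcing e) (mkS (Some i0, false)).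
  apply/minsetP; split; first exact: zf_mkS.
  move=> B zB sub; apply/eqP; rewrite eqEcard sub /= card_mkS.
  exact: (leq_trans _ (zf_lb zB)).
by have := @leq_bigmax_cond _ _ (fun S : {set T} => #|S|) _ M; rewrite card_mkS.
Qed.


Definition Rk k := fun a b : TARv e => [&& #|val a| <= k, #|val b| <= k & TAR_rel e a b].

Lemma edge_g k p q : sz p <= k -> sz q <= k -> cartprod e K2 p q -> Rk k (g p) (g q).
Proof. by move=> hp hq pq; rewrite /Rk /= !card_mkS hp hq /TAR_rel /= adj_mk. Qed.

Lemma Rk_sym k : symmetric (Rk k).
Proof.
move=> a b; rewrite /Rk /TAR_rel /symdiff setUC.
by case: (#|val a| <= k); case: (#|val b| <= k).
Qed.

Lemma conn_ge k : r <= k -> TARk_connected e k.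
Proof.
move=> rk; rewrite /TARk_connected /induced_connected; apply/andP; split.
  apply/existsP; exists (g (None, false)); by rewrite /= card_mkS /sz /=; lia.
have step2 : forall a, connect (Rk k) (g (a, false)) (g (None, false)).
  case=> [j|]; last exact: connect0.
  apply: connect1; apply: edge_g; rewrite /sz /=; try lia.
  by rewrite /cartprod /star /=.
have hub : forall x : TARv e, #|val x| <= k -> connect (Rk k) x (g (None, false)).
  move=> x hx; rewrite card_h in hx; rewrite -(hK x); move: (h x) hx => [a b] hx.
  case: b hx => hx; last exact: step2.
  apply: connect_trans (step2 a); apply: connect1; apply: edge_g => //.
    by move: hx; rewrite /sz /=; lia.
  by rewrite /cartprod /= eqxx.
apply/forallP => x; apply/forallP => y; apply/implyP => hx; apply/implyP => hy.
apply: connect_trans (hub x hx) _.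
by rewrite (sym_connect_sym (Rk_sym k)); apply: hub.
Qed.

Lemma conn_lt k : k < r -> ~~ TARk_connected e k.
Proof.
move=> kr; rewrite /TARk_connected /induced_connected.
apply/negP => /andP [/existsP [x0 Px0] /forallP C].
have lb := sz_lb (h x0); rewrite /= card_h in Px0.
pose x := g (Some i0, false); pose y := g (Some i1, false).
have Px : #|val x| <= k by rewrite /= card_mkS /sz /=; lia.
have Py : #|val y| <= k by rewrite /= card_mkS /sz /=; lia.
have := C x => /forallP /(_ y); rewrite /= Px Py /= => /connectP [p pth E].
case: p pth E => [|z p] /=.
  by move=> _ E; have := congr1 h E; rewrite !gK => -[].
move=> /andP [/and3P [_ Pz Exz] _] _.
rewrite adj_TAR gK in Exz; rewrite card_h in Pz.
move: (h z) Pz Exz => [[a|] [|]]; rewrite /cartprod /K2 /star /sz /= ?andbF //=; lia.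
Qed.

Lemma z0_low_star : z0_low e = r.
Proof.
have hrT : r < #|{: T}|.+1 by rewrite card_option card_ord; lia.
apply: (bigmin_eq (i := Ordinal hrT)) => //=.
- exact: conn_ge.
- move=> j cj; case: (leqP r j) => // /conn_lt; by rewrite cj.
Qed.

Lemma z0_star : z0 e = r.
Proof.
have hrT : r < #|{: T}|.+1 by rewrite card_option card_ord; lia.
apply: (bigmin_eq (i := Ordinal hrT)) => //=.
- by apply/forallP => i; apply/implyP; apply: conn_ge.
- move=> j /forallP cj; case: (leqP r j) => // jr.
  have hT : r.-1 < #|{: T}|.+1 by rewrite card_option card_ord; lia.
  have := cj (Ordinal hT); rewrite /=.
  have -> : j <= r.-1 by lia.
  by rewrite /= (negbTE (conn_lt _)) //; lia.
Qed.

End Star.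

Theorem proposition1p5 (r : nat) (hr : 2 <= r) :
  isomorphic (TAR_rel (star r)) (cartprod (star r) K2) /\
  Zbar (star r) = r - 1 /\ Zn (star r) = r - 1 /\
  z0 (star r) = r /\ z0_low (star r) = r.
Proof.
split; last by rewrite Zbar_star // Zn_star // z0_star // z0_low_star.
exists (@h r); split; last exact: adj_TAR.
exact: (Bijective (hK hr) (gK hr)).
Qed.
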